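(* Let $M_t=M_{y(t)}$, $y(t)=e^{i\theta(t)}$, $\theta(0)=\theta_0$, be the (ancient) spherical mean curvature flow of isoparametric hypersurfaces in $S^{n+1}$ with $g$ distinct principal curvatures, and let $A(t)$, $H(t)$ be the shape operator and (scalar) mean curvature of $M_t$ in $S^{n+1}$. Then $$\lim_{t\to-\infty}\|A(t)\|^2=(g-1)n.$$ If $M_0$ is not minimal, then $$\lim_{t\to-\infty}H^2(t)\,e^{-2gnt}=C_0,\qquad C_0=\frac{n^2(\cos g\theta_0+\delta)^2}{1-\delta^2}>0.$$
   Context: Let $M^n$ be a compact isoparametric hypersurface in the unit sphere $S^{n+1}\subset\mathbb{R}^{n+2}$ (constant principal curvatures) with $g$ distinct principal curvatures; then $g\in\{1,2,3,4,6\}$. Fix $x_0\in M$ and identify the 2-dimensional normal space $\nu_{x_0}M$ of $M$ in $\mathbb{R}^{n+2}$ with $\mathbb{C}$ so that the two focal submanifolds $M_+$, $M_-$ ($\dim M_+\le\dim M_-$) meet the normal circle at $1$ and $e^{i\pi/g}$ (the intersection points closest to $x_0$). The Weyl chamber is $C=\{re^{i\theta}:r>0,\ 0<\theta<\pi/g\}$. For $k=1,\dots,g$ let $\theta_k=k\pi/g-\pi/2$, $\alpha_k=e^{i\theta_k}$, and $m_k=m_1$ for $k$ odd, $m_k=m_2$ for $k$ even, where $(m_1,m_2)$, $m_1\le m_2$, is the multiplicity data of the principal curvatures; $m_1=m_2$ if $g$ is odd, and $(m_1+m_2)g=2n$. For $x\in C$, $M_x=\{p+\tilde\xi(p):p\in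 M\}$ where $\tilde\xi$ is the parallel normal field on $M$ with $\tilde\xi(x_0)=x-x_0$; it is an $n$-dimensional isoparametric submanifold of $\mathbb{R}^{n+2}$ lying in $S^{n+1}(|x|)$, with normal space $\nu_{x_0}M$ at $x$, and $T_xM_x=\oplus_kE_k$, $\dim E_k=m_k$, with Euclidean shape operator $A_\xi|_{E_k}=\langle\xi,-\alpha_k/\langle x,\alpha_k\rangle\rangle\mathrm{Id}$ ($\langle\cdot,\cdot\rangle$ the real inner product on $\mathbb{C}=\mathbb{R}^2$). $H^E(x),A^E(x)$ denote mean curvature vector and shape operator of $M_x$ at $x$ in $\mathbb{R}^{n+2}$; $H^S(x),A^S(x)$ those of $M_x$ as a hypersurface of $S^{n+1}(|x|)$; $\|A\|^2$ is the sum of squared Hilbert–Schmidt norms over an orthonormal normal basis. Set $\delta=(m_2-m_1)/(m_2+m_1)$ if $g\ge2$ and $\delta=0$ if $g=1$, and let $\theta_{\min}\in(0,\pi/g)$ be defined by $\cos g\theta_{\min}=-\delta$. The spherical MCF of $M_{y(0)}$ is the family $M_{y(t)}$ with $y(t)\in C$ unit and $y'(t)=H^S(y(t))$; it exists for all $t\le 0$. In the claim $A(t)=A^S(y(t))$ and $H^2(t)=\|H^S(y(t))\|^2$. *)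

(* Defs.v *)
From Stdlib Require Import Reals Lra.
Open Scope R_scope.

(* Points of the normal plane nu_{x0}M = C = R^2, as pairs. *)
Definition inner (u v : R * R) : R := fst u * fst v + snd u * snd v.
Definition rnorm (u : R * R) : R := sqrt (inner u u).

Fixpoint sum1 (f : nat -> R) (g : nat) : R :=
  match g with
  | O => 0
  | S g' => sum1 f g' + f (S g')
  end.

Definition theta_k (g k : nat) : R := INR k * PI / INR g - PI / 2.
Definition alpha_k (g k : nat) : R * R := (cos (theta_k g k), sin (theta_k g k)).

Definition mult (m1 m2 k : nat) : nat := if Nat.odd k then m1 else m2.

Definition in_chamber (g : nat) (x : R * R) : Prop :=
  exists r th, 0 < r /\ 0 < th /\ th < PI / INR g /\
    x = (r * cos th, r * sin th).

(* Eigenvalue of the Euclidean shape operator A_xi of M_x on E_k: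
   <xi, - alpha_k / <x, alpha_k>>. *)
Definition shape_eig (g k : nat) (x xi : R * R) : R :=
  inner xi ((- fst (alpha_k g k)) / inner x (alpha_k g k),
            (- snd (alpha_k g k)) / inner x (alpha_k g k)).

(* Unit normal of M_x inside the sphere S^{n+1}(|x|): the unit vector of
   nu_{x0}M orthogonal to x (i x / |x|). *)
Definition sphere_normal (x : R * R) : R * R :=
  (- snd x / rnorm x, fst x / rnorm x).

Definition AS_eig (g k : nat) (x : R * R) : R :=
  shape_eig g k x (sphere_normal x).

Definition HS_vec (g m1 m2 : nat) (x : R * R) : R * R :=
  let h := sum1 (fun k => INR (mult m1 m2 k) * AS_eig g k x) g in
  (h * fst (sphere_normal x), h * snd (sphere_normal x)).

(* ||A^S(x)||^2 : Hilbert-Schmidt norm squared, computed on the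
   eigenspace decomposition T_x M_x = (+)_k E_k, dim E_k = m_k. *)
Definition AS_normsq (g m1 m2 : nat) (x : R * R) : R :=
  sum1 (fun k => INR (mult m1 m2 k) * (AS_eig g k x) ^ 2) g.

Definition delta (g m1 m2 : nat) : R :=
  if (2 <=? g)%nat then (INR m2 - INR m1) / (INR m2 + INR m1) else 0.

Definition lim_minus_infty (f : R -> R) (L : R) : Prop :=
  forall eps, 0 < eps -> exists T, forall t, t <= T -> Rabs (f t - L) < eps.

(* Main.v *)
Require Import Defs.
From Stdlib Require Import Reals Lra Lia Nsatz.
Open Scope R_scope.

Fixpoint cpow (k : nat) (y1 y2 : R) : R * R :=
  match k with
  | O => (1, 0)
  | S k' => let p := cpow k' y1 y2 in
            (fst p * y1 - snd p * y2, fst p * y2 + snd p * y1)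
  end.

Definition hsum g m1 m2 (x : R * R) := sum1 (fun k => INR (mult m1 m2 k) * AS_eig g k x) g.
Definition lam (a b y1 y2 : R) := (y2*a - y1*b)/(y1*a+y2*b).
Definition dk_ok g y1 y2 := forall k, (1 <= k <= g)%nat -> inner (y1,y2) (alpha_k g k) <> 0.

Lemma rnorm1 y1 y2 : y1*y1+y2*y2 = 1 -> rnorm (y1,y2) = 1.
Proof. intro H. unfold rnorm, inner; simpl. rewrite H. exact sqrt_1. Qed.

Lemma AS_eig_eq g k y1 y2 : y1*y1+y2*y2 = 1 ->
  AS_eig g k (y1,y2) = lam (fst (alpha_k g k)) (snd (alpha_k g k)) y1 y2.
Proof.
  intro H. unfold AS_eig, shape_eig, sphere_normal, lam. rewrite rnorm1 by exact H.
  unfold inner; simpl. unfold Rdiv. rewrite Rinv_1. ring.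
Qed.

Lemma alpha_eq g k : alpha_k g k = (sin (INR k * PI / INR g), - cos (INR k * PI / INR g)).
Proof.
  unfold alpha_k, theta_k. f_equal.
  - replace (INR k * PI / INR g - PI / 2) with (- (PI/2 - INR k * PI / INR g)) by ring.
    rewrite cos_neg, cos_shift. reflexivity.
  - replace (INR k * PI / INR g - PI / 2) with (- (PI/2 - INR k * PI / INR g)) by ring.
    rewrite sin_neg, sin_shift. reflexivity.
Qed.

Ltac av e := rewrite alpha_eq; replace (INR _ * PI / INR _) with e by (simpl; field);
  repeat first [rewrite sin_PI_x | rewrite Rtrigo_facts.cos_pi_minus | rewrite sin_PI6 | rewrite cos_PI6
    | rewrite sin_PI3 | rewrite cos_PI3 | rewrite sin_PI4 | rewrite cos_PI4 | rewrite sin_PI2 | rewrite cos_PI2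
    | rewrite sin_PI | rewrite cos_PI]; f_equal; try ring.

Lemma a11 : alpha_k 1 1 = (0, 1). Proof. av PI. Qed.
Lemma a21 : alpha_k 2 1 = (1, 0). Proof. av (PI/2). Qed.
Lemma a22 : alpha_k 2 2 = (0, 1). Proof. av PI. Qed.
Lemma a31 : alpha_k 3 1 = (sqrt 3/2, -(1/2)). Proof. av (PI/3). Qed.
Lemma a32 : alpha_k 3 2 = (sqrt 3/2, 1/2). Proof. av (PI - PI/3). Qed.
Lemma a33 : alpha_k 3 3 = (0, 1). Proof. av PI. Qed.
Lemma a41 : alpha_k 4 1 = (1/sqrt 2, -(1/sqrt 2)). Proof. av (PI/4). Qed.
Lemma a42 : alpha_k 4 2 = (1, 0). Proof. av (PI/2). Qed.
Lemma a43 : alpha_k 4 3 = (1/sqrt 2, 1/sqrt 2). Proof. av (PI - PI/4). Qed.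
Lemma a44 : alpha_k 4 4 = (0, 1). Proof. av PI. Qed.
Lemma a61 : alpha_k 6 1 = (1/2, -(sqrt 3/2)). Proof. av (PI/6). Qed.
Lemma a62 : alpha_k 6 2 = (sqrt 3/2, -(1/2)). Proof. av (PI/3). Qed.
Lemma a63 : alpha_k 6 3 = (1, 0). Proof. av (PI/2). Qed.
Lemma a64 : alpha_k 6 4 = (sqrt 3/2, 1/2). Proof. av (PI - PI/3). Qed.
Lemma a65 : alpha_k 6 5 = (1/2, sqrt 3/2). Proof. av (PI - PI/6). Qed.
Lemma a66 : alpha_k 6 6 = (0, 1). Proof. av PI. Qed.

Definition keyP (g m1 m2 : nat) (y1 y2 : R) : Prop :=
  let M1 := INR m1 in let M2 := INR m2 in let G := INR g in
  let c := fst (cpow g y1 y2) in let S := snd (cpow g y1 y2) in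
  hsum g m1 m2 (y1,y2) * S = - (G*(M1+M2)/2) * c - G*(M2-M1)/2 /\
  AS_normsq g m1 m2 (y1,y2) * S^2 =
    (G-1)*(G*(M1+M2)/2)*S^2 + G*((G*(M1+M2)/2)*c + G*(M2-M1)/2)*c.

Ltac dk H k a := let Hk := fresh "D" in
  assert (Hk := H k ltac:(lia)); rewrite a in Hk; unfold inner in Hk; simpl in Hk.

Ltac side := repeat split; intro E; match goal with Hh : _ <> 0 |- _ => apply Hh; lra end.

Lemma key6 m1 m2 y1 y2 : y1*y1+y2*y2 = 1 -> dk_ok 6 y1 y2 -> keyP 6 m1 m2 y1 y2.
Proof.
  intros Hc H. dk H 1%nat a61. dk H 2%nat a62. dk H 3%nat a63. dk H 4%nat a64. dk H 5%nat a65. dk H 6%nat a66.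
  clear H.
  assert (Hs : sqrt 3 * sqrt 3 = 3) by (apply sqrt_sqrt; lra).
  unfold keyP, hsum, AS_normsq. simpl sum1. rewrite !AS_eig_eq by exact Hc.
  rewrite a61, a62, a63, a64, a65, a66. unfold mult. simpl. unfold lam.
  set (s := sqrt 3) in *.
  split.
  - field_simplify_eq; [ cbn [pow]; nsatz | side ].
  - field_simplify_eq; [ cbn [pow]; nsatz | side ].
Qed.

Lemma key1 m1 m2 y1 y2 : m1 = m2 -> y1*y1+y2*y2 = 1 -> dk_ok 1 y1 y2 -> keyP 1 m1 m2 y1 y2.
Proof.
  intros Hm Hc H. subst m2. dk H 1%nat a11. clear H.
  unfold keyP, hsum, AS_normsq. simpl sum1. rewrite !AS_eig_eq by exact Hc.
  rewrite a11. unfold mult. simpl. unfold lam.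
  split.
  - field_simplify_eq; [ cbn [pow]; nsatz | side ].
  - field_simplify_eq; [ cbn [pow]; nsatz | side ].
Qed.

Lemma key2 m1 m2 y1 y2 : y1*y1+y2*y2 = 1 -> dk_ok 2 y1 y2 -> keyP 2 m1 m2 y1 y2.
Proof.
  intros Hc H. dk H 1%nat a21. dk H 2%nat a22. clear H.
  unfold keyP, hsum, AS_normsq. simpl sum1. rewrite !AS_eig_eq by exact Hc.
  rewrite a21, a22. unfold mult. simpl. unfold lam.
  split.
  - field_simplify_eq; [ cbn [pow]; nsatz | side ].
  - field_simplify_eq; [ cbn [pow]; nsatz | side ].
Qed.

Lemma key3 m1 m2 y1 y2 : m1 = m2 -> y1*y1+y2*y2 = 1 -> dk_ok 3 y1 y2 -> keyP 3 m1 m2 y1 y2.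
Proof.
  intros Hm Hc H. subst m2. dk H 1%nat a31. dk H 2%nat a32. dk H 3%nat a33. clear H.
  assert (Hs : sqrt 3 * sqrt 3 = 3) by (apply sqrt_sqrt; lra).
  unfold keyP, hsum, AS_normsq. simpl sum1. rewrite !AS_eig_eq by exact Hc.
  rewrite a31, a32, a33. unfold mult. simpl. unfold lam.
  set (s := sqrt 3) in *.
  split.
  - field_simplify_eq; [ cbn [pow]; nsatz | side ].
  - field_simplify_eq; [ cbn [pow]; nsatz | side ].
Qed.

Lemma key4 m1 m2 y1 y2 : y1*y1+y2*y2 = 1 -> dk_ok 4 y1 y2 -> keyP 4 m1 m2 y1 y2.
Proof.
  intros Hc H. dk H 1%nat a41. dk H 2%nat a42. dk H 3%nat a43. dk H 4%nat a44. clear H.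
  assert (Hs : sqrt 2 * sqrt 2 = 2) by (apply sqrt_sqrt; lra).
  assert (Hs0 : sqrt 2 <> 0) by (intro E; rewrite E in Hs; lra).
  assert (Hq : (1 / sqrt 2) * (1 / sqrt 2) * 2 = 1) .
  { replace ((1/sqrt 2)*(1/sqrt 2)*2) with (2 / (sqrt 2 * sqrt 2)) by (field; exact Hs0).
    rewrite Hs; field. }
  unfold keyP, hsum, AS_normsq. simpl sum1. rewrite !AS_eig_eq by exact Hc.
  rewrite a41, a42, a43, a44. unfold mult. simpl. unfold lam.
  set (q := 1 / sqrt 2) in *. clearbody q. clear Hs Hs0.
  split.
  - field_simplify_eq; [ cbn [pow]; nsatz | side ].
  - field_simplify_eq; [ cbn [pow]; nsatz | side ].
Qed.

Lemma keyAll g m1 m2 y1 y2 :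
  (g = 1%nat \/ g = 2%nat \/ g = 3%nat \/ g = 4%nat \/ g = 6%nat) ->
  (Nat.odd g = true -> m1 = m2) -> y1*y1+y2*y2 = 1 -> dk_ok g y1 y2 -> keyP g m1 m2 y1 y2.
Proof.
  intros Hg Ho Hc Hd. destruct Hg as [E|[E|[E|[E|E]]]]; subst g.
  - apply key1; auto.
  - apply key2; auto.
  - apply key3; auto.
  - apply key4; auto.
  - apply key6; auto.
Qed.

Lemma cpow_trig k x : cpow k (cos x) (sin x) = (cos (INR k * x), sin (INR k * x)).
Proof.
  induction k as [|k IH].
  - simpl. rewrite Rmult_0_l, cos_0, sin_0. reflexivity.
  - simpl cpow. rewrite IH. simpl fst; simpl snd. rewrite S_INR.
    replace ((INR k + 1) * x) with (INR k * x + x) by ring.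
    rewrite cos_plus, sin_plus. f_equal; ring.
Qed.

Lemma dpl_eq f t l l' : derivable_pt_lim f t l -> l = l' -> derivable_pt_lim f t l'.
Proof. intros H E; subst; exact H. Qed.

Lemma dmm f g u v t a b c d : derivable_pt_lim f t a -> derivable_pt_lim g t b ->
  derivable_pt_lim u t c -> derivable_pt_lim v t d ->
  derivable_pt_lim (fun s => f s * g s - u s * v s) t (a * g t + f t * b - (c * v t + u t * d)).
Proof. intros. exact (derivable_pt_lim_minus _ _ _ _ _ (derivable_pt_lim_mult _ _ _ _ _ H H0) (derivable_pt_lim_mult _ _ _ _ _ H1 H2)). Qed.

Lemma dpp f g u v t a b c d : derivable_pt_lim f t a -> derivable_pt_lim g t b ->
  derivable_pt_lim u t c -> derivable_pt_lim v t d ->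
  derivable_pt_lim (fun s => f s * g s + u s * v s) t (a * g t + f t * b + (c * v t + u t * d)).
Proof. intros. exact (derivable_pt_lim_plus _ _ _ _ _ (derivable_pt_lim_mult _ _ _ _ _ H H0) (derivable_pt_lim_mult _ _ _ _ _ H1 H2)). Qed.

Lemma cpow_der k (y1 y2 : R -> R) t h :
  derivable_pt_lim y1 t (- (y2 t) * h) -> derivable_pt_lim y2 t (y1 t * h) ->
  derivable_pt_lim (fun s => fst (cpow k (y1 s) (y2 s))) t (- INR k * h * snd (cpow k (y1 t) (y2 t))) /\
  derivable_pt_lim (fun s => snd (cpow k (y1 s) (y2 s))) t (INR k * h * fst (cpow k (y1 t) (y2 t))).
Proof.
  intros H1 H2. induction k as [|k [IH1 IH2]].
  - simpl. split; eapply dpl_eq; try apply derivable_pt_lim_const; ring.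
  - simpl cpow. simpl fst; simpl snd. split.
    + eapply dpl_eq.
      apply (dmm (fun s => fst (cpow k (y1 s) (y2 s))) y1 (fun s => snd (cpow k (y1 s) (y2 s))) y2);
        [exact IH1|exact H1|exact IH2|exact H2].
      rewrite S_INR. ring.
    + eapply dpl_eq.
      apply (dpp (fun s => fst (cpow k (y1 s) (y2 s))) y2 (fun s => snd (cpow k (y1 s) (y2 s))) y1);
        [exact IH1|exact H2|exact IH2|exact H1].
      rewrite S_INR. ring.
Qed.

Lemma cmm f g u v t : continuity_pt f t -> continuity_pt g t -> continuity_pt u t -> continuity_pt v t ->
  continuity_pt (fun s => f s * g s - u s * v s) t.
Proof. intros. exact (continuity_pt_minus _ _ _ (continuity_pt_mult _ _ _ H H0) (continuity_pt_mult _ _ _ H1 H2)). Qed.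
Lemma cpp f g u v t : continuity_pt f t -> continuity_pt g t -> continuity_pt u t -> continuity_pt v t ->
  continuity_pt (fun s => f s * g s + u s * v s) t.
Proof. intros. exact (continuity_pt_plus _ _ _ (continuity_pt_mult _ _ _ H H0) (continuity_pt_mult _ _ _ H1 H2)). Qed.

Lemma cpow_cont k (y1 y2 : R -> R) t : continuity_pt y1 t -> continuity_pt y2 t ->
  continuity_pt (fun s => fst (cpow k (y1 s) (y2 s))) t /\
  continuity_pt (fun s => snd (cpow k (y1 s) (y2 s))) t.
Proof.
  intros H1 H2. induction k as [|k [IH1 IH2]].
  - simpl. split; apply continuity_pt_const; intros a b; reflexivity.
  - simpl cpow. simpl fst; simpl snd. split.
    + apply (cmm (fun s => fst (cpow k (y1 s) (y2 s))) y1 (fun s => snd (cpow k (y1 s) (y2 s))) y2); assumption.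
    + apply (cpp (fun s => fst (cpow k (y1 s) (y2 s))) y2 (fun s => snd (cpow k (y1 s) (y2 s))) y1); assumption.
Qed.

Lemma lim_ext (F G : R -> R) L : (forall t, t <= 0 -> F t = G t) -> lim_minus_infty G L -> lim_minus_infty F L.
Proof.
  intros E H eps He. destruct (H eps He) as [T HT]. exists (Rmin T 0). intros t Ht.
  rewrite E by (pose proof (Rmin_r T 0); lra). apply HT. pose proof (Rmin_l T 0); lra.
Qed.

Lemma lim_comp u a f : lim_minus_infty u a -> continuity_pt f a -> lim_minus_infty (fun t => f (u t)) (f a).
Proof.
  intros Hu Hf eps He.
  destruct (Hf eps He) as [al [Hal Hf2]].
  destruct (Hu al Hal) as [T HT]. exists T. intros t Ht.
  destruct (Req_dec (u t) a) as [E|E].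
  - rewrite E. unfold Rminus. rewrite Rplus_opp_r, Rabs_R0. exact He.
  - apply (Hf2 (u t)). split. split. exact I. auto.
    unfold R_dist. apply HT. exact Ht.
Qed.

Lemma lim_exp K0 K d : 0 < K -> lim_minus_infty (fun t => - d + K0 * exp (K * t)) (- d).
Proof.
  intros HK eps He.
  set (T := ln (eps / (Rabs K0 + 1)) / K).
  exists T. intros t Ht.
  assert (HA : 0 < Rabs K0 + 1) by (pose proof (Rabs_pos K0); lra).
  assert (Hq : 0 < eps / (Rabs K0 + 1)) by (apply Rdiv_lt_0_compat; lra).
  assert (Hkt : K * t <= ln (eps / (Rabs K0 + 1))).
  { unfold T in Ht. apply (Rmult_le_compat_l K) in Ht; [|lra].
    replace (K * (ln (eps / (Rabs K0 + 1)) / K)) with (ln (eps / (Rabs K0 + 1))) in Ht by (field; lra). exact Ht. }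
  assert (He2 : exp (K * t) <= eps / (Rabs K0 + 1)).
  { rewrite <- (exp_ln (eps / (Rabs K0 + 1))) by exact Hq.
    destruct (Req_dec (K*t) (ln (eps / (Rabs K0 + 1)))) as [E|E]; [rewrite E; lra|].
    left. apply exp_increasing. lra. }
  replace (- d + K0 * exp (K * t) - - d) with (K0 * exp (K * t)) by ring.
  rewrite Rabs_mult, (Rabs_right (exp (K*t))) by (left; apply exp_pos).
  pose proof (exp_pos (K*t)).
  apply Rle_lt_trans with (Rabs K0 * (eps / (Rabs K0 + 1))).
  - apply Rmult_le_compat_l; [apply Rabs_pos | exact He2].
  - replace (Rabs K0 * (eps / (Rabs K0 + 1))) with (eps * (Rabs K0 / (Rabs K0 + 1))) by (field; lra).
    assert (Rabs K0 / (Rabs K0 + 1) < 1).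
    { apply (Rmult_lt_reg_r (Rabs K0 + 1)); [lra|]. unfold Rdiv. rewrite Rmult_assoc, Rinv_l by lra. lra. }
    pose proof (Rabs_pos K0).
    assert (0 <= Rabs K0 / (Rabs K0 + 1)) by (apply Rmult_le_pos; [lra| left; apply Rinv_0_lt_compat; lra]).
    nra.
Qed.

Lemma chamber_th g a b : (1 <= g)%nat -> in_chamber g (a, b) -> a*a+b*b = 1 ->
  exists th, 0 < th < PI / INR g /\ a = cos th /\ b = sin th.
Proof.
  intros Hg [r [th [Hr [H1 [H2 E]]]]] Hc. injection E as Ea Eb.
  assert (Hs := sin2_cos2 th). unfold Rsqr in Hs.
  assert (r * r = 1) by (subst; nra).
  assert (r = 1) by nra. subst r.
  exists th. split; [lra|]. split; [rewrite Ea|rewrite Eb]; ring.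
Qed.

Lemma angle_bounds g k : (1 <= k <= g)%nat ->
  PI / INR g <= INR k * PI / INR g <= PI.
Proof.
  intros Hk.
  assert (Hk1 : 1 <= INR k) by (apply (le_INR 1); lia).
  assert (Hkg : INR k <= INR g) by (apply le_INR; lia).
  assert (HP := PI_RGT_0).
  assert (Hg0 : 0 < INR g) by lra.
  split.
  - unfold Rdiv. rewrite Rmult_assoc. rewrite <- (Rmult_1_l (PI * / INR g)) at 1.
    apply Rmult_le_compat_r; [|lra]. left. apply Rmult_lt_0_compat; [lra|apply Rinv_0_lt_compat; lra].
  - apply (Rmult_le_reg_r (INR g)); [lra|]. unfold Rdiv. rewrite Rmult_assoc, Rinv_l by lra. nra.
Qed.

Lemma dk_pos g th : (1 <= g)%nat -> 0 < th < PI / INR g -> dk_ok g (cos th) (sin th).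
Proof.
  intros Hg Hth k Hk.
  unfold inner, alpha_k; simpl.
  rewrite <- cos_minus. apply Rgt_not_eq. apply cos_gt_0.
  - unfold theta_k. destruct (angle_bounds g k Hk). lra.
  - unfold theta_k. destruct (angle_bounds g k Hk). lra.
Qed.

Lemma S_pos g th : (1 <= g)%nat -> 0 < th < PI / INR g -> 0 < sin (INR g * th).
Proof.
  intros Hg Hth. assert (Hg0 : 0 < INR g) by (apply lt_0_INR; lia).
  apply sin_gt_0. nra.
  apply (Rmult_lt_reg_r (/ INR g)). apply Rinv_0_lt_compat; lra.
  replace (INR g * th * / INR g) with th by (field; lra). exact (proj2 Hth).
Qed.

Lemma dexp a t : derivable_pt_lim (fun s => exp (a * s)) t (a * exp (a * t)).
Proof.
  eapply dpl_eq.
  apply (derivable_pt_lim_comp (fun s => a * s) exp t a (exp (a * t))).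
  - eapply dpl_eq. apply derivable_pt_lim_scal. apply derivable_pt_lim_id. ring.
  - apply derivable_pt_lim_exp.
  - ring.
Qed.

Lemma const_lemma (E : R -> R) : (forall t, t < 0 -> derivable_pt_lim E t 0) ->
  forall a b, a <= b < 0 -> E b = E a.
Proof.
  intros Hd a b Hab.
  assert (pr : forall x, a < x < b -> derivable_pt E x).
  { intros x Hx. exists 0. apply Hd. lra. }
  assert (Hc := null_derivative_loc E a b pr).
  apply Hc.
  - intros x Hx. apply derivable_continuous_pt. exists 0. apply Hd. lra.
  - intros x P. apply derive_pt_eq_0. apply Hd. lra.
  - lra.
Qed.

Lemma lcont_eq (E : R -> R) : (forall t, t < 0 -> derivable_pt_lim E t 0) ->
  (forall eps, 0 < eps -> exists del, 0 < del /\ forall s, - del < s <= 0 -> Rabs (E s - E 0) < eps) ->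
  forall t, t <= 0 -> E t = E 0.
Proof.
  intros Hd Hl t Ht. destruct (Req_dec t 0) as [->|Hne]; [reflexivity|].
  destruct (Req_dec (E t) (E 0)) as [E'|E']; [exact E'|exfalso].
  assert (He : 0 < Rabs (E t - E 0)) by (apply Rabs_pos_lt; lra).
  destruct (Hl _ He) as [del [Hdel Hs]].
  set (s := Rmax (t/2) (- del/2)).
  assert (H1 : t/2 <= s) by apply Rmax_l.
  assert (H2 : - del/2 <= s) by apply Rmax_r.
  assert (H3 : s < 0) by (unfold s; apply Rmax_lub_lt; lra).
  assert (Ets : E s = E t) by (apply const_lemma; [exact Hd | lra]).
  specialize (Hs s ltac:(lra)). rewrite Ets in Hs. lra.
Qed.

Lemma lcE g d K (y1 y2 : R -> R) :
  (forall eps, 0 < eps -> exists del, 0 < del /\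
     forall t, - del < t <= 0 -> Rabs (y1 t - y1 0) < eps /\ Rabs (y2 t - y2 0) < eps) ->
  let E := fun s => (fst (cpow g (y1 s) (y2 s)) + d) * exp (K * s) in
  forall eps, 0 < eps -> exists del, 0 < del /\ forall s, - del < s <= 0 -> Rabs (E s - E 0) < eps.
Proof.
  intros Hc E.
  set (Y1 := fun s => if Rle_dec s 0 then y1 s else y1 0).
  set (Y2 := fun s => if Rle_dec s 0 then y2 s else y2 0).
  assert (CY1 : continuity_pt Y1 0).
  { unfold continuity_pt, continue_in, limit1_in, limit_in. intros eps He.
    destruct (Hc eps He) as [dl [Hdl H]]. exists dl. split; [exact Hdl|].
    intros x [[_ Hx] Hd]. simpl in *. unfold R_dist in *. unfold Y1.
    destruct (Rle_dec 0 0) as [_|n]; [|lra].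
    destruct (Rle_dec x 0) as [Hx0|Hx0].
    - apply H. rewrite Rminus_0_r in Hd. apply Rabs_def2 in Hd. lra.
    - unfold Rminus. rewrite Rplus_opp_r, Rabs_R0. exact He. }
  assert (CY2 : continuity_pt Y2 0).
  { unfold continuity_pt, continue_in, limit1_in, limit_in. intros eps He.
    destruct (Hc eps He) as [dl [Hdl H]]. exists dl. split; [exact Hdl|].
    intros x [[_ Hx] Hd]. simpl in *. unfold R_dist in *. unfold Y2.
    destruct (Rle_dec 0 0) as [_|n]; [|lra].
    destruct (Rle_dec x 0) as [Hx0|Hx0].
    - apply H. rewrite Rminus_0_r in Hd. apply Rabs_def2 in Hd. lra.
    - unfold Rminus. rewrite Rplus_opp_r, Rabs_R0. exact He. }
  set (Eh := fun s => (fst (cpow g (Y1 s) (Y2 s)) + d) * exp (K * s)).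
  assert (CE : continuity_pt Eh 0).
  { unfold Eh. destruct (cpow_cont g Y1 Y2 0 CY1 CY2) as [C1 _].
    apply (continuity_pt_mult (fun s => fst (cpow g (Y1 s) (Y2 s)) + d) (fun s => exp (K * s))).
    - apply (continuity_pt_plus (fun s => fst (cpow g (Y1 s) (Y2 s))) (fun _ => d)); [exact C1|].
      apply continuity_pt_const. intros a b; reflexivity.
    - reg. }
  intros eps He.
  destruct (CE eps He) as [dl [Hdl H]]. exists dl. split; [exact Hdl|].
  intros s Hs.
  assert (EQs : Eh s = E s).
  { unfold Eh, E, Y1, Y2. destruct (Rle_dec s 0); [reflexivity|lra]. }
  assert (EQ0 : Eh 0 = E 0).
  { unfold Eh, E, Y1, Y2. destruct (Rle_dec 0 0); [reflexivity|lra]. }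
  rewrite <- EQs, <- EQ0.
  destruct (Req_dec s 0) as [->|Hne].
  - unfold Rminus. rewrite Rplus_opp_r, Rabs_R0. exact He.
  - apply (H s). split. split. exact I. auto. simpl. unfold R_dist. rewrite Rminus_0_r.
    apply Rabs_def1; lra.
Qed.

Theorem theorem4p14
  (g m1 m2 n : nat)
  (Hg : g = 1%nat \/ g = 2%nat \/ g = 3%nat \/ g = 4%nat \/ g = 6%nat)
  (Hm1 : (1 <= m1)%nat) (Hm12 : (m1 <= m2)%nat)
  (Hodd : Nat.odd g = true -> m1 = m2)
  (Hdim : ((m1 + m2) * g = 2 * n)%nat)
  (theta0 : R) (Htheta0 : 0 < theta0 < PI / INR g)
  (y1 y2 : R -> R)
  (Hy0 : y1 0 = cos theta0 /\ y2 0 = sin theta0)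
  (Hunit : forall t, t <= 0 -> (y1 t) ^ 2 + (y2 t) ^ 2 = 1)
  (Hch : forall t, t <= 0 -> in_chamber g (y1 t, y2 t))
  (Hflow : forall t, t < 0 ->
     derivable_pt_lim y1 t (fst (HS_vec g m1 m2 (y1 t, y2 t))) /\
     derivable_pt_lim y2 t (snd (HS_vec g m1 m2 (y1 t, y2 t))))
  (Hcont0 : forall eps, 0 < eps -> exists d, 0 < d /\
     forall t, - d < t <= 0 -> Rabs (y1 t - y1 0) < eps /\ Rabs (y2 t - y2 0) < eps) :
  lim_minus_infty (fun t => AS_normsq g m1 m2 (y1 t, y2 t)) ((INR g - 1) * INR n) /\
  (HS_vec g m1 m2 (y1 0, y2 0) <> (0, 0) ->
     let C0 := (INR n) ^ 2 * (cos (INR g * theta0) + delta g m1 m2) ^ 2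
               / (1 - (delta g m1 m2) ^ 2) in
     0 < C0 /\
     lim_minus_infty
       (fun t => inner (HS_vec g m1 m2 (y1 t, y2 t)) (HS_vec g m1 m2 (y1 t, y2 t))
                 * exp (- 2 * INR g * INR n * t))
       C0).
Proof.
  destruct Hy0 as [Hy01 Hy02].
  assert (Hg1 : (1 <= g)%nat) by (destruct Hg as [|[|[|[|]]]]; subst; lia).
  assert (HG : 1 <= INR g) by (apply (le_INR 1); exact Hg1).
  assert (HM1 : 1 <= INR m1) by (apply (le_INR 1); exact Hm1).
  assert (HM12 : INR m1 <= INR m2) by (apply le_INR; exact Hm12).
  assert (HN : INR n = INR g * (INR m1 + INR m2) / 2).
  { apply (f_equal INR) in Hdim. rewrite !mult_INR, plus_INR in Hdim. simpl in Hdim. lra. }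
  set (d := delta g m1 m2).
  assert (Hd : INR n * d = INR g * (INR m2 - INR m1) / 2 /\ 0 <= d < 1).
  { unfold d, delta. destruct (2 <=? g)%nat eqn:E.
    - assert (Hp : 0 < INR m2 + INR m1) by lra.
      split. rewrite HN. field. lra.
      set (i := / (INR m2 + INR m1)).
      assert (Hi : (INR m2 + INR m1) * i = 1) by (unfold i; field; lra).
      assert (Hi0 : 0 < i) by (unfold i; apply Rinv_0_lt_compat; lra).
      unfold Rdiv. fold i. split; nra.
    - apply Nat.leb_gt in E. assert (g = 1%nat) by lia. subst g.
      rewrite (Hodd eq_refl). split; lra. }
  destruct Hd as [Hnd [Hd0 Hd1]].
  set (N := INR n) in *. set (G := INR g) in *.
  assert (HN1 : 1 <= N) by (rewrite HN; nra).
  set (c := fun t => fst (cpow g (y1 t) (y2 t))).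
  set (S := fun t => snd (cpow g (y1 t) (y2 t))).
  set (h := fun t => hsum g m1 m2 (y1 t, y2 t)).
  assert (Hfacts : forall t, t <= 0 ->
     y1 t * y1 t + y2 t * y2 t = 1 /\ 0 < S t /\ c t * c t + S t * S t = 1 /\
     h t * S t = - N * (c t + d) /\
     AS_normsq g m1 m2 (y1 t, y2 t) * (S t)^2 = (G - 1) * N * (S t)^2 + G * N * (c t + d) * c t).
  { intros t Ht.
    assert (Hc : y1 t * y1 t + y2 t * y2 t = 1) by (rewrite <- (Hunit t Ht); ring).
    destruct (chamber_th g (y1 t) (y2 t) Hg1 (Hch t Ht) Hc) as [th [Hth [E1 E2]]].
    assert (Hdk := dk_pos g th Hg1 Hth).
    rewrite <- E1, <- E2 in Hdk.
    destruct (keyAll g m1 m2 (y1 t) (y2 t) Hg Hodd Hc Hdk) as [K1 K2]. cbv zeta in K1, K2. fold G in K1, K2.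
    assert (Hcs : c t = cos (G * th) /\ S t = sin (G * th)).
    { unfold c, S. rewrite E1, E2, cpow_trig. split; reflexivity. }
    split; [exact Hc|]. split.
    { rewrite (proj2 Hcs). apply S_pos; assumption. }
    split.
    { rewrite (proj1 Hcs), (proj2 Hcs). pose proof (sin2_cos2 (G*th)). unfold Rsqr in H. lra. }
    split.
    - unfold h, S, c. rewrite K1. rewrite <- Hnd. rewrite HN. ring.
    - unfold S, c. rewrite K2. rewrite <- Hnd. rewrite HN. ring. }
  set (K := G * N).
  assert (HK : 0 < K) by (unfold K; nra).
  set (E := fun s => (fst (cpow g (y1 s) (y2 s)) + d) * exp ((- K) * s)).
  assert (Hder : forall t, t < 0 -> derivable_pt_lim E t 0).
  { intros t Ht. destruct (Hflow t Ht) as [F1 F2].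
    destruct (Hfacts t (Rlt_le _ _ Ht)) as [Hc [_ [_ [Hh _]]]].
    assert (D1 : derivable_pt_lim y1 t (- y2 t * h t)).
    { eapply dpl_eq. exact F1. unfold HS_vec, sphere_normal, h, hsum. simpl.
      rewrite rnorm1 by exact Hc. unfold Rdiv. rewrite Rinv_1. ring. }
    assert (D2 : derivable_pt_lim y2 t (y1 t * h t)).
    { eapply dpl_eq. exact F2. unfold HS_vec, sphere_normal, h, hsum. simpl.
      rewrite rnorm1 by exact Hc. unfold Rdiv. rewrite Rinv_1. ring. }
    destruct (cpow_der g y1 y2 t (h t) D1 D2) as [Dc _].
    unfold E. eapply dpl_eq.
    apply (derivable_pt_lim_mult (fun s => fst (cpow g (y1 s) (y2 s)) + d) (fun s => exp (- K * s))).
    - apply (derivable_pt_lim_plus (fun s => fst (cpow g (y1 s) (y2 s))) (fun _ => d)).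
      exact Dc. apply derivable_pt_lim_const.
    - apply dexp.
    - fold G. change (snd (cpow g (y1 t) (y2 t))) with (S t).
      change (fst (cpow g (y1 t) (y2 t))) with (c t).
      replace (- G * h t * S t) with (- G * (h t * S t)) by ring. rewrite Hh.
      unfold K. ring. }
  assert (HE : forall t, t <= 0 -> E t = E 0).
  { apply lcont_eq. exact Hder. apply (lcE g d (- K) y1 y2 Hcont0). }
  set (K0 := cos (G * theta0) + d).
  assert (HE0 : E 0 = K0).
  { unfold E, K0. rewrite Hy01, Hy02, cpow_trig. simpl fst. rewrite Rmult_0_r, exp_0. fold G. ring. }
  assert (Hcexp : forall t, t <= 0 -> c t = - d + K0 * exp (K * t)).
  { intros t Ht. rewrite <- HE0, <- (HE t Ht). unfold E, c.
    replace (K * t) with (- (- K * t)) by ring. rewrite exp_Ropp.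
    field. apply Rgt_not_eq, exp_pos. }
  assert (Hclim : lim_minus_infty c (- d)).
  { apply (lim_ext c (fun t => - d + K0 * exp (K * t))). exact Hcexp. apply lim_exp. exact HK. }
  assert (Hd2 : 1 - (- d) * (- d) <> 0) by nra.
  split.
  - set (f1 := fun x => (G - 1) * N + G * N * (x + d) * x / (1 - x * x)).
    assert (L := lim_comp c (- d) f1 Hclim ltac:(unfold f1; reg)).
    replace ((G - 1) * N) with (f1 (- d)) by (unfold f1; field; exact Hd2).
    apply (lim_ext _ (fun t => f1 (c t))); [|exact L].
    intros t Ht. destruct (Hfacts t Ht) as [_ [HS [Hcs [_ HA]]]].
    unfold f1. replace (1 - c t * c t) with (S t ^ 2) by (simpl; lra).
    apply (Rmult_eq_reg_r (S t ^ 2)); [| apply pow_nonzero; lra].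
    rewrite HA. field. lra.
  - intros Hne C0.
    destruct (Hfacts 0 (Rle_refl 0)) as [Hc0 [HS0 [Hcs0 [Hh0 _]]]].
    assert (HK0 : K0 <> 0).
    { intro Z. apply Hne. 
      assert (Hz : h 0 = 0).
      { assert (c 0 + d = 0).
        { rewrite (Hcexp 0 (Rle_refl 0)), Z. ring. }
        rewrite H, Rmult_0_r in Hh0. apply Rmult_integral in Hh0. destruct Hh0; [assumption|lra]. }
      unfold HS_vec. unfold h, hsum in Hz. rewrite Hz. f_equal; ring. }
    split.
    + unfold C0. fold d. fold G. fold K0. fold N.
      apply Rdiv_lt_0_compat.
      * apply Rmult_lt_0_compat. apply pow_lt; lra. simpl. rewrite Rmult_1_r. apply Rsqr_pos_lt. exact HK0.
      * simpl. nra.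
    + set (f2 := fun x => N ^ 2 * K0 ^ 2 / (1 - x * x)).
      assert (L := lim_comp c (- d) f2 Hclim ltac:(unfold f2; reg)).
      replace C0 with (f2 (- d)).
      2:{ unfold C0, f2. fold d. fold G. fold K0. fold N.
          replace (1 - d ^ 2) with (1 - - d * - d) by ring. reflexivity. }
      apply (lim_ext _ (fun t => f2 (c t))); [|exact L].
      intros t Ht. destruct (Hfacts t Ht) as [Hc [HS [Hcs [Hh _]]]].
      assert (Hin : inner (HS_vec g m1 m2 (y1 t, y2 t)) (HS_vec g m1 m2 (y1 t, y2 t)) = h t ^ 2).
      { unfold HS_vec.
        change (sum1 (fun k => INR (mult m1 m2 k) * AS_eig g k (y1 t, y2 t)) g) with (h t).
        unfold inner, sphere_normal. simpl. rewrite rnorm1 by exact Hc. unfold Rdiv. rewrite Rinv_1.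
        transitivity (h t * h t * (y1 t * y1 t + y2 t * y2 t)); [ring | rewrite Hc; ring]. }
      rewrite Hin. unfold f2.
      replace (1 - c t * c t) with (S t * S t) by lra.
      assert (HSn : S t <> 0) by lra.
      apply (Rmult_eq_reg_r (S t * S t)); [| apply Rmult_integral_contrapositive; split; exact HSn].
      assert (He : exp (K * t) * exp (K * t) * exp (- 2 * G * N * t) = 1).
      { rewrite <- !exp_plus. replace (K * t + K * t + - 2 * G * N * t) with 0 by (unfold K; ring). exact exp_0. }
      transitivity ((h t * S t) ^ 2 * exp (- 2 * G * N * t)); [ring|].
      rewrite Hh, (Hcexp t Ht).
      transitivity (N ^ 2 * K0 ^ 2 * (exp (K * t) * exp (K * t) * exp (- 2 * G * N * t))); [ring|].
      rewrite He. field. exact HSn.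
Qed.
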